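(* Let $M\subseteq[r]^d$ be a dot array satisfying (P2), (P3) and (P4). Then $M$ is a totally rankable dot array of rank $r$.
   Context: $[r]=\{0,\dots,r\}$; a dot array is a subset of $[r]^d$, partially ordered coordinatewise with meet $\mathbf x\wedge\mathbf y=(\min(x_i,y_i))_i$. Rankability. Let $\mathrm{rk}_iP$ be one less than the number of distinct $i$-th coordinates among elements of $P$. $P$ is rankable of rank $s$ if $\mathrm{rk}_iP=s$ for all $i$. $P$ is totally rankable if every principal subarray $P[\mathbf x]=\{\mathbf y\in P:\mathbf y\succeq\mathbf x\}$, $\mathbf x\in[r]^d$, is rankable. Its rank is the rank of $P$ itself. Subarrays. A $[k]^d$-subarray of $M$ is $M\cap(A_1\times\dots\times A_d)$ with $A_i\subseteq[r]$ and $|A_i|=k+1$. It is regarded as a dot array in $[k]^d$ via the order-preserving bijections $A_i\to[k]$. Properties of a dot array $M\subseteq[r]^d$: (P1) $M$ is closed under $\wedge$. (P2) for every $j$ and every $c\in[r]$ some $\mathbf w\in M$ has $w_j=c$. (P3) every set $S$ of $r+2$ elements of $M$ contains a subset $S'$ (with at least two elements) such that for every $i$ the value $\min\{x_i:\mathbf x\in S'\}$ is attained by at least two elements of $S'$. (P4) (recursive in $r$; vacuous for $r=0$) for every $0\le k\le r-1$ and every set $N$ of $k+1$ elements of $M$, there is a $[k]^d$-subarray $M'$ of $M$ containing $N$ which, as a dot array in $[k]^d$, satisfies (P1), (P2), (P3), (P4) with $r$ replaced by $k$. *)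

(* Defs.v *)
From mathcomp Require Import all_boot all_order all_algebra.
Set Implicit Arguments. Unset Strict Implicit. Unset Printing Implicit Defensive.
Import GRing.Theory.

(* Points of [r]^d = {0..r}^d, as finite functions 'I_d -> 'I_(r+1). *)
Definition pt (d r : nat) := {ffun 'I_d -> 'I_r.+1}.

Definition ple d r (x y : pt d r) : bool := [forall i, (x i <= y i)%N].

Definition meet d r (x y : pt d r) : pt d r :=
  [ffun i => if (x i <= y i)%N then x i else y i].

Definition P1 d r (M : {set pt d r}) : Prop :=
  forall x y, x \in M -> y \in M -> meet x y \in M.

Definition P2 d r (M : {set pt d r}) : Prop :=
  forall (j : 'I_d) (c : 'I_r.+1), exists2 w, w \in M & w j = c.

Definition P3 d r (M : {set pt d r}) : Prop :=
  forall S : {set pt d r}, S \subset M -> #|S| = r.+2 ->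
    exists S' : {set pt d r}, [/\ S' \subset S, (1 < #|S'|)%N &
      forall i : 'I_d, exists x y, [/\ x \in S', y \in S', x != y, x i = y i &
                           forall z, z \in S' -> (x i <= z i)%N]].

(* A [k]^d-subarray of M (k <= r) is given by strictly increasing maps
   f i : [k] -> [r] (f i is the inverse of the order-preserving bijection
   A_i -> [k], A_i = image of f i). *)
Definition embed d k r (f : 'I_d -> 'I_k.+1 -> 'I_r.+1) (y : pt d k) : pt d r :=
  [ffun i => f i (y i)].

Definition subarray d k r (M : {set pt d r}) (f : 'I_d -> 'I_k.+1 -> 'I_r.+1)
  : {set pt d k} := [set y | embed f y \in M].

Definition strictly_increasing d k r (f : 'I_d -> 'I_k.+1 -> 'I_r.+1) : Prop :=
  forall i (a b : 'I_k.+1), (a < b)%N -> (f i a < f i b)%N.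

Definition contained_in_box d k r (N : {set pt d r}) (f : 'I_d -> 'I_k.+1 -> 'I_r.+1)
  : Prop := forall x, x \in N -> forall i, exists a, f i a = x i.

(* (P4), recursive in r (well-founded since k < r): least predicate closed under
   the defining clause; vacuous for r = 0. *)
Inductive P4 (d : nat) : forall r : nat, {set pt d r} -> Prop :=
| P4_intro (r : nat) (M : {set pt d r}) :
    (forall k, (k < r)%N -> forall N : {set pt d r}, N \subset M -> #|N| = k.+1 ->
       exists f : 'I_d -> 'I_k.+1 -> 'I_r.+1,
         [/\ strictly_increasing f, contained_in_box N f,
             P1 (subarray M f), P2 (subarray M f) &
             P3 (subarray M f) /\ P4 (subarray M f)]) ->
    P4 M.

Definition rk d r (i : 'I_d) (P : {set pt d r}) : int :=
  (#|[set (x : pt d r) i | x in P]|%:Z - 1)%R.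

Definition rankable_of_rank d r (P : {set pt d r}) (s : int) : Prop :=
  forall i : 'I_d, rk i P = s.

Definition rankable d r (P : {set pt d r}) : Prop :=
  exists s : int, rankable_of_rank P s.

Definition principal d r (P : {set pt d r}) (x : pt d r) : {set pt d r} :=
  [set y in P | ple x y].

Definition totally_rankable d r (P : {set pt d r}) : Prop :=
  forall x : pt d r, rankable (principal P x).

(* Main.v *)
Require Import Defs.
From mathcomp Require Import all_boot all_order all_algebra.
Set Implicit Arguments. Unset Strict Implicit. Unset Printing Implicit Defensive.

Lemma subset_card_ex (T : finType) (A : {set T}) m :
  m <= #|A| -> exists2 B : {set T}, B \subset A & #|B| = m.
Proof.
elim: m => [|m IH] le; first by exists set0; rewrite ?sub0set ?cards0.
have [B sBA cB] := IH (ltnW le).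
have : 0 < #|A :\: B| by rewrite cardsD (setIidPr sBA) cB subn_gt0.
case/card_gt0P => a; rewrite inE => /andP [aB aA].
exists (a |: B); first by rewrite subUset sub1set aA sBA.
by rewrite cardsU1 aB cB.
Qed.

Definition cnt d r (i : 'I_d) (P : {set pt d r}) := #|[set (x : pt d r) i | x in P]|.

Lemma cnt_le d r (i : 'I_d) (P : {set pt d r}) : cnt i P <= r.+1.
Proof. by rewrite /cnt; apply: leq_trans (max_card _) _; rewrite card_ord. Qed.

Lemma get_N d r (P : {set pt d r}) (i : 'I_d) m : m <= cnt i P ->
  exists N : {set pt d r}, [/\ N \subset P, #|N| = m &
     {in N &, injective (fun y : pt d r => y i)}].
Proof.
move=> le; have [W sW cW] := subset_card_ex le.
case: (boolP (P == set0)) => [/eqP P0|/set0Pn [y0 y0P]].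
  move: le; rewrite /cnt P0 imset0 cards0 leqn0 => /eqP ->.
  by exists set0; rewrite sub0set cards0; split=> // ? ?; rewrite inE.
pose h v := odflt y0 [pick y in P | y i == v].
have hP v : v \in [set (x : pt d r) i | x in P] -> h v \in P /\ h v i = v.
  case/imsetP=> y yP ->; rewrite /h; case: pickP => [z /andP [zP /eqP zi]|].
    by [].
  by move/(_ y); rewrite yP eqxx.
have hinj : {in W &, injective h}.
  by move=> v w /(subsetP sW) /hP [_ hv] /(subsetP sW) /hP [_ hw] e; rewrite -hv -hw e.
exists (h @: W); split.
- by apply/subsetP=> z /imsetP [v /(subsetP sW) /hP [? _] ->].
- by rewrite card_in_imset.
- move=> a b /imsetP [v /(subsetP sW) /hP [_ hv] ->] /imsetP [w /(subsetP sW) /hP [_ hw] ->].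
  by rewrite hv hw => ->.
Qed.

Lemma P4_inv d r (M : {set pt d r}) : P4 M ->
    (forall k, (k < r)%N -> forall N : {set pt d r}, N \subset M -> #|N| = k.+1 ->
       exists f : 'I_d -> 'I_k.+1 -> 'I_r.+1,
         [/\ strictly_increasing f, contained_in_box N f,
             P1 (subarray M f), P2 (subarray M f) &
             P3 (subarray M f) /\ P4 (subarray M f)]).
Proof. by case. Qed.

Lemma lemA d r (M : {set pt d r}) (x : pt d r) (j : 'I_d) (N : {set pt d r}) :
  P3 M -> N \subset principal M x -> #|N| = r.+1 ->
  {in N &, injective (fun y : pt d r => y j)} -> M \subset principal M x.
Proof.
move=> H3 sN cN inj; apply/subsetP => w wM; apply/negPn/negP => wP.
have [i wi] : exists i, w i < x i.
  move: wP; rewrite inE wM /= /ple => /forallPn [i]; rewrite -ltnNge => ?.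
  by exists i.
have wN : w \notin N by apply: contra wP => /(subsetP sN).
have sNM : N \subset M by apply: subset_trans sN _; apply/subsetP=> z; rewrite inE => /andP [].
have sS : w |: N \subset M by rewrite subUset sub1set wM sNM.
have cS : #|w |: N| = r.+2 by rewrite cardsU1 wN cN.
have [S' [sS' c2 Hm]] := H3 _ sS cS.
have Nx z : z \in N -> x i <= z i.
  by move/(subsetP sN); rewrite inE /ple => /andP [_ /forallP].
case: (boolP (w \in S')) => wS.
  have [a [b [aS bS ab eab amin]]] := Hm i.
  have aw : a = w.
    have := amin w wS => le; have := subsetP sS' a aS; rewrite in_setU1.
    case/orP=> [/eqP -> //|aN]; have := Nx a aN => le2.
    by move: (leq_trans le2 le); rewrite leqNgt wi.
  have bw : b = w.
    have := subsetP sS' b bS; rewrite in_setU1.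
    case/orP=> [/eqP -> //|bN]; have := Nx b bN.
    by rewrite -eab aw leqNgt wi.
  by move: ab; rewrite aw bw eqxx.
have sSN : S' \subset N.
  apply/subsetP=> z zS; have := subsetP sS' z zS; rewrite in_setU1.
  by case/orP=> // /eqP ze; move: wS; rewrite -ze zS.
have [a [b [aS bS ab eab _]]] := Hm j.
by move: ab; rewrite (inj a b (subsetP sSN a aS) (subsetP sSN b bS) eab) eqxx.
Qed.

Lemma lemB d r (M : {set pt d r})
  (IH : forall k, k < r -> forall M' : {set pt d k}, P2 M' -> P3 M' -> P4 M' ->
          forall x i j, cnt i (principal M' x) = cnt j (principal M' x))
  (H4 : P4 M) (x : pt d r) (i j : 'I_d) (N : {set pt d r}) (s : nat) :
  N \subset principal M x -> #|N| = s.+1 ->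
  {in N &, injective (fun y : pt d r => y j)} ->
  cnt i (principal M x) <= s -> s < r -> False.
Proof.
move=> sN cN inj ci sr.
have sNM : N \subset M by apply: subset_trans sN _; apply/subsetP=> z; rewrite inE => /andP [].
have [f [fi box _ H2' [H3' H4']]] := P4_inv H4 sr sNM cN.
have mono l (a b : 'I_s.+1) : a <= b -> f l a <= f l b.
  by rewrite leq_eqVlt => /orP [/eqP/val_inj -> //|/fi/ltnW].
have finj l : injective (f l).
  move=> a b e; apply/val_inj; case: (ltngtP a b) => // h.
    by have := fi l _ _ h; rewrite e ltnn.
  by have := fi l _ _ h; rewrite e ltnn.
have [n0 n0N] : exists n0, n0 \in N.
  by apply/set0Pn; rewrite -card_gt0 cN.
pose g l v := odflt ord0 [pick a | f l a == v].
have gK l (n : pt d r) : n \in N -> f l (g l (n l)) = n l.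
  move=> nN; rewrite /g; case: pickP => [a /eqP //|].
  by have [a <-] := box n nN l; move/(_ a); rewrite eqxx.
have Nx l (n : pt d r) : n \in N -> x l <= n l.
  by move/(subsetP sN); rewrite inE /ple => /andP [_ /forallP].
pose x' : pt d s := [ffun l => [arg min_(a < g l (n0 l) | x l <= f l a) (a : nat)]].
have x'a l : x l <= f l (x' l).
  rewrite ffunE; case: arg_minnP => //; by rewrite gK // Nx.
have x'b l (n : pt d r) : n \in N -> x' l <= g l (n l).
  move=> nN; rewrite ffunE; case: arg_minnP; first by rewrite gK // Nx.
  by move=> a _ /(_ (g l (n l))); apply; rewrite gK // Nx.
have := IH s sr _ H2' H3' H4' x' i j.
pose Y := [set ([ffun l => g l (n l)] : pt d s) | n : pt d r in N].
have sY : Y \subset principal (subarray M f) x'.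
  apply/subsetP=> y /imsetP [n nN ->]; rewrite !inE; apply/andP; split.
    have -> : embed f [ffun l => g l (n l)] = n.
      by apply/ffunP=> l; rewrite !ffunE gK.
    exact: subsetP sNM n nN.
  by apply/forallP=> l; apply: leq_trans (x'b l n nN) _; rewrite ffunE.
have cj : s.+1 <= cnt j (principal (subarray M f) x').
  have cYj : #|[set (y : pt d s) j | y in Y]| = s.+1.
    rewrite -imset_comp card_in_imset ?cN // => a b aN bN /= e.
    apply: inj => //; move: e; rewrite !ffunE => e.
    by rewrite -(gK j a aN) -(gK j b bN) e.
  by rewrite /cnt -[X in X <= _]cYj; apply: subset_leq_card (imsetS _ sY).
have ci' : cnt i (principal (subarray M f) x') <= s.
  apply: leq_trans ci; rewrite /cnt -(card_imset _ (finj i)).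
  apply: subset_leq_card; apply/subsetP=> v /imsetP [u /imsetP [y yP ->] ->].
  move: yP; rewrite !inE => /andP [yM /forallP yx].
  apply/imsetP; exists (embed f y); last by rewrite ffunE.
  rewrite inE yM /=; apply/forallP=> l; rewrite ffunE.
  exact: leq_trans (x'a l) (mono _ _ _ (yx l)).
by move=> e; move: ci'; rewrite e leqNgt cj.
Qed.

Lemma cntM d r (M : {set pt d r}) (j : 'I_d) : P2 M -> cnt j M = r.+1.
Proof.
move=> H2; apply/eqP; rewrite eqn_leq cnt_le /=.
have -> : r.+1 = #|[set: 'I_r.+1]| by rewrite cardsT card_ord.
apply: subset_leq_card; apply/subsetP=> c _.
by have [w wM <-] := H2 j c; apply/imsetP; exists w.
Qed.

Lemma main_ind d r (M : {set pt d r}) : P2 M -> P3 M -> P4 M ->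
  forall x i j, cnt i (principal M x) = cnt j (principal M x).
Proof.
move: M; elim/ltn_ind: r => r IH M H2 H3 H4.
suff le x i j : cnt i (principal M x) <= cnt j (principal M x).
  by move=> x i j; apply/eqP; rewrite eqn_leq !le.
rewrite leqNgt; apply/negP => lt.
have [N [sN cN inj]] := get_N lt.
case: (ltnP (cnt j (principal M x)) r) => sr.
  exact: (lemB IH H4 sN cN inj (leqnn _) sr).
have sr' : cnt j (principal M x) = r.
  by apply/eqP; rewrite eqn_leq sr andbT -ltnS; apply: leq_trans lt (cnt_le _ _).
rewrite sr' in cN.
have sM := lemA H3 sN cN inj.
have eM : principal M x = M.
  by apply/eqP; rewrite eqEsubset sM andbT; apply/subsetP=> z; rewrite inE => /andP [].
by move: sr'; rewrite eM cntM // => /eqP; rewrite -{2}(addn0 r) -addn1 eqn_add2l.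
Qed.

Import GRing.Theory.

Theorem mainTheorem4 (d r : nat) (M : {set pt d r}) :
  P2 M -> P3 M -> P4 M ->
  totally_rankable M /\ rankable_of_rank M (r%:Z).
Proof.
move=> H2 H3 H4; split.
  move=> x; exists (match [pick i : 'I_d] with Some i0 => rk i0 (principal M x) | None => 0%R end).
  move=> i; case: pickP => [i0 _|/(_ i) //].
  by rewrite /rk; have := main_ind H2 H3 H4 x i i0; rewrite /cnt => ->.
move=> i; rewrite /rk; have := cntM i H2; rewrite /cnt => ->.
by rewrite -addn1 PoszD addrK.
Qed.
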